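(* Fix $\lambda>0$, $L\ge2$, an index $l\in\{1,\dots,L\}$, $\alpha_i\in\mathbb{C}$, $r_i>0$, a unit vector ${\bm\kappa}_i=(\Phi_i,\Psi_i,\Theta_i)^T\in\mathbb{R}^3$, and for each $l'\neq l$ a complex number $V_{k,l,l'}$ and a real number $r_{i,l'}$. For ${\bf q}=(x,y,z)^T\in\mathbb{R}^3$ define $$r_{i,l}({\bf q})=r_i+x\Phi_i+y\Psi_i+z\Theta_i+\frac{x^2+y^2+z^2-(x\Phi_i+y\Psi_i+z\Theta_i)^2}{2r_i},$$ $$g_{k,i,l}({\bf q})=\sum_{l'\neq l}2|\alpha_i|^2|V_{k,l,l'}|\cos\!\Big(\frac{2\pi}{\lambda}\big(r_{i,l}({\bf q})-r_{i,l'}\big)+\angle V_{k,l,l'}\Big).$$ Let $S\subseteq\mathbb{R}^3$ be a convex set with $C_{\max}:=\sup_{{\bf q}\in S}\|{\bf q}\|^2<\infty$, and let $$\delta_{k,i,l}=\frac{2\pi}{\lambda}\sum_{l'\neq l}2|\alpha_i|^2|V_{k,l,l'}|\sqrt{\frac{2}{r_i^2}+\Big(\frac{2\pi}{\lambda}\Big)^2\Big(1+\frac{C_{\max}}{r_i^2}\Big)^2}.$$ Then for all ${\bf q}_l,{\bf q}_l^{(j)}\in S$, $$g_{k,i,l}({\bf q}_l)\ge g_{k,i,l}({\bf q}_l^{(j)})+\nabla g_{k,i,l}({\bf q}_l^{(j)})^T({\bf q}_l-{\bf q}_l^{(j)})-\frac{\delta_{k,i,l}}{2}\|{\bf q}_l-{\bf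 q}_l^{(j)}\|^2,$$ $$g_{k,i,l}({\bf q}_l)\le g_{k,i,l}({\bf q}_l^{(j)})+\nabla g_{k,i,l}({\bf q}_l^{(j)})^T({\bf q}_l-{\bf q}_l^{(j)})+\frac{\delta_{k,i,l}}{2}\|{\bf q}_l-{\bf q}_l^{(j)}\|^2.$$
   Context: $\angle z$ denotes the argument (phase) of a complex number $z$, and $\nabla g_{k,i,l}$ is the gradient of $g_{k,i,l}$ with respect to ${\bf q}\in\mathbb{R}^3$. In the paper, $r_{i,l}({\bf q})$ is the second-order Taylor approximation of the distance from user $i$ to UAV $l$ located at relative position ${\bf q}$, and $g_{k,i,l}$ is the part of $|{\bf v}_k^H{\bf h}_i|^2$ depending on UAV $l$'s position, with $V_{k,l,l'}=v_{k,l}v_{k,l'}^*$. *)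

(* Defs.v *)
From Stdlib Require Import Reals Lra.
From Coquelicot Require Import Coquelicot.
Open Scope R_scope.

Definition R3 := (R * R * R)%type.
Definition px (q : R3) : R := fst (fst q).
Definition py (q : R3) : R := snd (fst q).
Definition pz (q : R3) : R := snd q.
Definition dot3 (p q : R3) : R := px p * px q + py p * py q + pz p * pz q.
Definition sub3 (p q : R3) : R3 := (px p - px q, py p - py q, pz p - pz q).
Definition norm2 (q : R3) : R := dot3 q q.

(* Argument (phase) of a complex number, in (-pi, pi]; arg 0 := 0. *)
Definition Carg (z : C) : R :=
  if Req_EM_T (Cmod z) 0 then 0
  else if Rle_dec 0 (Im z) then acos (Re z / Cmod z)
       else - acos (Re z / Cmod z).

Definition grad3 (f : R3 -> R) (q : R3) : R3 :=
  (Derive (fun t => f (t, py q, pz q)) (px q),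
   Derive (fun t => f (px q, t, pz q)) (py q),
   Derive (fun t => f (px q, py q, t)) (pz q)).

Definition convex3 (S : R3 -> Prop) : Prop :=
  forall p q t, S p -> S q -> 0 <= t <= 1 ->
    S (t * px p + (1 - t) * px q, t * py p + (1 - t) * py q,
       t * pz p + (1 - t) * pz q).

(* second-order Taylor approximation of the user-UAV distance;
   kap = (Phi, Psi, Theta) *)
Definition r_il (ri : R) (kap : R3) (q : R3) : R :=
  ri + dot3 q kap + (norm2 q - (dot3 q kap) ^ 2) / (2 * ri).

(* g_{k,i,l}: UAVs indexed 0..L-1, sum over l' <> l.
   alpha = alpha_i, V l' = V_{k,l,l'}, rl' l' = r_{i,l'}. *)
Definition g_kil (lam : R) (L l : nat) (alpha : C) (ri : R) (kap : R3)
    (V : nat -> C) (rl' : nat -> R) (q : R3) : R :=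
  sum_f_R0 (fun l' => if Nat.eqb l' l then 0 else
     2 * (Cmod alpha) ^ 2 * Cmod (V l') *
     cos (2 * PI / lam * (r_il ri kap q - rl' l') + Carg (V l'))) (L - 1).

Definition delta_kil (lam : R) (L l : nat) (alpha : C) (ri : R)
    (V : nat -> C) (Cmax : R) : R :=
  2 * PI / lam *
  sum_f_R0 (fun l' => if Nat.eqb l' l then 0 else
     2 * (Cmod alpha) ^ 2 * Cmod (V l') *
     sqrt (2 / ri ^ 2 + (2 * PI / lam) ^ 2 * (1 + Cmax / ri ^ 2) ^ 2)) (L - 1).

(* Main.v *)
From Stdlib Require Import Reals Lra.
From Coquelicot Require Import Coquelicot.
Require Import Defs.
Open Scope R_scope.

Lemma cos_chain (h : R -> R) h' x K : is_derive h x h' ->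
  is_derive (fun t => K * cos (h t)) x (- K * sin (h x) * h').
Proof. intro H. auto_derive.
- exists h'; exact H.
- replace (Derive (fun x : R => h x) x) with h' by (symmetry; apply is_derive_unique; apply H). lra.
Qed.

Definition rr ri k1 k2 k3 x y z := r_il ri (k1,k2,k3) (x,y,z).

Lemma dX_lem K c a b ri k1 k2 k3 x y z : 0 < ri ->
 is_derive (fun t => K * cos (c*(r_il ri (k1,k2,k3) (t,y,z) - a) + b)) x
  (- K * sin(c*(r_il ri (k1,k2,k3) (x,y,z) - a)+b) * (c * (k1 + (x - (x*k1+y*k2+z*k3)*k1)/ri))).
Proof. intro Hr. apply (cos_chain (fun t => c*(r_il ri (k1,k2,k3) (t,y,z) - a) + b)).
unfold r_il, norm2, dot3, px, py, pz; simpl. auto_derive.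
- lra.
- field. lra.
Qed.
Lemma dY_lem K c a b ri k1 k2 k3 x y z : 0 < ri ->
 is_derive (fun t => K * cos (c*(r_il ri (k1,k2,k3) (x,t,z) - a) + b)) y
  (- K * sin(c*(r_il ri (k1,k2,k3) (x,y,z) - a)+b) * (c * (k2 + (y - (x*k1+y*k2+z*k3)*k2)/ri))).
Proof. intro Hr. apply (cos_chain (fun t => c*(r_il ri (k1,k2,k3) (x,t,z) - a) + b)).
unfold r_il, norm2, dot3, px, py, pz; simpl. auto_derive.
- lra.
- field. lra.
Qed.
Lemma dZ_lem K c a b ri k1 k2 k3 x y z : 0 < ri ->
 is_derive (fun t => K * cos (c*(r_il ri (k1,k2,k3) (x,y,t) - a) + b)) z
  (- K * sin(c*(r_il ri (k1,k2,k3) (x,y,z) - a)+b) * (c * (k3 + (z - (x*k1+y*k2+z*k3)*k3)/ri))).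
Proof. intro Hr. apply (cos_chain (fun t => c*(r_il ri (k1,k2,k3) (x,y,t) - a) + b)).
unfold r_il, norm2, dot3, px, py, pz; simpl. auto_derive.
- lra.
- field. lra.
Qed.

Definition th c a b R0 R1 Q t := c*(R0 + R1*t + Q*t*t + - a) + b.
Definition phi K c a b R0 R1 Q t := K * cos (th c a b R0 R1 Q t).
Definition phi1 K c a b R0 R1 Q t := - K * sin (th c a b R0 R1 Q t) * (c*(R1 + 2*Q*t)).
Definition phi2 K c a b R0 R1 Q t :=
  - K * cos (th c a b R0 R1 Q t) * (c*(R1 + 2*Q*t)) * (c*(R1 + 2*Q*t))
  - K * sin (th c a b R0 R1 Q t) * (c*(2*Q)).

Lemma phi_d K c a b R0 R1 Q t : is_derive (phi K c a b R0 R1 Q) t (phi1 K c a b R0 R1 Q t).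
Proof. unfold phi, phi1. apply (cos_chain (th c a b R0 R1 Q)). unfold th. auto_derive; [exact I| ring]. Qed.

Lemma phi1_d K c a b R0 R1 Q t : is_derive (phi1 K c a b R0 R1 Q) t (phi2 K c a b R0 R1 Q t).
Proof. unfold phi1, phi2, th. auto_derive; [exact I| ring]. Qed.

Lemma der_cont (f : R -> R) (df x : R) : is_derive f x df -> continuity_pt f x.
Proof. intro H. apply continuity_pt_filterlim. apply (ex_derive_continuous (K:=R_AbsRing) (V:=R_NormedModule)). exists df; exact H. Qed.

Lemma taylor_up (f f1 f2 : R -> R) M :
  (forall t, is_derive f t (f1 t)) -> (forall t, is_derive f1 t (f2 t)) ->
  (forall t, 0 <= t <= 1 -> f2 t <= M) -> f 1 - f 0 - f1 0 <= M / 2.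
Proof.
intros H1 H2 HM.
set (p := fun t => f t - f 0 - f1 0 * t - M / 2 * (t * t)).
set (p1 := fun t => f1 t - f1 0 - M * t).
set (p2 := fun t => f2 t - M).
assert (D1 : forall t, is_derive p t (p1 t)).
{ intro t. change R in t. unfold p, p1. auto_derive.
  - exists (f1 t); apply H1.
  - replace (Derive (fun x : R => f x) t) with (f1 t) by (symmetry; apply is_derive_unique; apply H1). lra. }
assert (D2 : forall t, is_derive p1 t (p2 t)).
{ intro t. change R in t. unfold p1, p2. auto_derive.
  - exists (f2 t); apply H2.
  - replace (Derive (fun x : R => f1 x) t) with (f2 t) by (symmetry; apply is_derive_unique; apply H2). lra. }
assert (S1 : forall t, 0 <= t <= 1 -> p1 t <= 0).
{ intros t Ht. destruct (Req_dec t 0) as [->|Hn].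
  - unfold p1; lra.
  - destruct (MVT_gen p1 0 t p2) as [c [Hc Hc2]].
    + intros; apply D2.
    + intros; eapply der_cont; apply D2.
    + rewrite Rmin_left in Hc by lra. rewrite Rmax_right in Hc by lra.
      assert (p1 0 = 0) by (unfold p1; ring).
      assert (p2 c <= 0) by (unfold p2; specialize (HM c); lra).
      nra. }
destruct (MVT_gen p 0 1 p1) as [c [Hc Hc2]].
- intros; apply D1.
- intros; eapply der_cont; apply D1.
- rewrite Rmin_left in Hc by lra. rewrite Rmax_right in Hc by lra.
  specialize (S1 c Hc). unfold p in Hc2. lra.
Qed.

Lemma abs_inv x a : Rabs x <= a -> - a <= x <= a.
Proof. unfold Rabs; destruct Rcase_abs; lra. Qed.
Lemma abs_intro x a : - a <= x <= a -> Rabs x <= a.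
Proof. unfold Rabs; destruct Rcase_abs; lra. Qed.

Lemma phi_taylor K c a b R0 R1 Q B :
  (forall t, 0 <= t <= 1 -> Rabs (phi2 K c a b R0 R1 Q t) <= B) ->
  Rabs (phi K c a b R0 R1 Q 1 - phi K c a b R0 R1 Q 0 - phi1 K c a b R0 R1 Q 0) <= B / 2.
Proof.
intro HB. apply abs_intro. split.
- assert (H := taylor_up (fun t => - phi K c a b R0 R1 Q t) (fun t => - phi1 K c a b R0 R1 Q t)
     (fun t => - phi2 K c a b R0 R1 Q t) B).
  assert (-phi K c a b R0 R1 Q 1 - - phi K c a b R0 R1 Q 0 - - phi1 K c a b R0 R1 Q 0 <= B/2).
  { apply H.
    + intro t. apply (is_derive_opp (phi K c a b R0 R1 Q)). apply phi_d.
    + intro t. apply (is_derive_opp (phi1 K c a b R0 R1 Q)). apply phi1_d.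
    + intros t Ht. specialize (HB t Ht); apply abs_inv in HB; lra. }
  lra.
- apply taylor_up with (f2 := phi2 K c a b R0 R1 Q).
  + apply phi_d. + apply phi1_d.
  + intros t Ht. specialize (HB t Ht); apply abs_inv in HB; lra.
Qed.

Lemma hess_bound K c ri A N v w co s : 0 <= K -> 0 < c -> 0 < ri -> 1 <= A -> 0 <= N ->
  0 <= v <= N / ri -> w * w <= N * A -> co * co + s * s = 1 ->
  Rabs (- K * co * (c*w) * (c*w) - K * s * (c*v)) <= K * sqrt (2 / ri ^ 2 + c ^ 2 * A ^ 2) * c * N.
Proof.
intros HK Hc Hr HA HN Hv Hw Hcs.
set (X := c * w * w * co + v * s).
assert (E : - K * co * (c*w) * (c*w) - K * s * (c*v) = - (K * c) * X) by (unfold X; ring).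
rewrite E, Rabs_mult, Rabs_Ropp, Rabs_right by nra.
set (M := 2 / ri ^ 2 + c ^ 2 * A ^ 2).
assert (HX2 : X * X <= (c*w*w)*(c*w*w) + v * v).
{ unfold X. assert (0 <= (c*w*w*s - v*co)^2) by apply pow2_ge_0. nra. }
assert (Hw0 : 0 <= w * w) by nra.
assert (H1 : (c*w*w)*(c*w*w) <= c^2 * A^2 * (N*N)).
{ assert (w*w*(w*w) <= (N*A)*(N*A)) by nra. nra. }
assert (Hvr : v * ri <= N).
{ destruct Hv as [_ Hv]. apply (Rmult_le_compat_r ri) in Hv; [|lra].
  unfold Rdiv in Hv. rewrite Rmult_assoc, Rinv_l in Hv by lra. lra. }
assert (H2 : v * v <= 2 / ri^2 * (N * N)).
{ assert (0 <= v*ri) by nra. assert (v*ri*(v*ri) <= N*N) by nra.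
  assert (E2 : 2 / ri ^ 2 * (N * N) = 2 * (N*N) / (ri*ri)) by (field; lra).
  rewrite E2. apply Rmult_le_reg_r with (ri*ri); [nra|].
  replace (2*(N*N)/(ri*ri)*(ri*ri)) with (2*(N*N)) by (field; lra). nra. }
assert (HXM : X * X <= M * (N * N)) by (unfold M; rewrite Rmult_plus_distr_r; lra).
assert (HM0 : 0 <= M) by (unfold M; assert (0 < ri^2) by (apply pow_lt; lra);
   assert (0 <= 2/ri^2) by (apply Rlt_le, Rdiv_lt_0_compat; lra); nra).
assert (HaX : Rabs X <= sqrt M * N).
{ rewrite <- sqrt_Rsqr_abs. unfold Rsqr.
  rewrite <- (sqrt_square N) by lra. rewrite <- sqrt_mult by nra.
  apply sqrt_le_1_alt. lra. }
assert (0 <= sqrt M) by apply sqrt_pos.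
assert (0 <= K * c) by nra.
replace (K * sqrt M * c * N) with ((K * c) * (sqrt M * N)) by ring.
apply Rmult_le_compat_l; lra.
Qed.

Lemma cs3 a1 a2 a3 b1 b2 b3 :
  (a1*b1+a2*b2+a3*b3)*(a1*b1+a2*b2+a3*b3) <= (a1*a1+a2*a2+a3*a3)*(b1*b1+b2*b2+b3*b3).
Proof.
assert (E : (a1*a1+a2*a2+a3*a3)*(b1*b1+b2*b2+b3*b3) - (a1*b1+a2*b2+a3*b3)*(a1*b1+a2*b2+a3*b3)
  = (a1*b2-a2*b1)^2 + (a1*b3-a3*b1)^2 + (a2*b3-a3*b2)^2) by ring.
assert (0 <= (a1*b2-a2*b1)^2) by apply pow2_ge_0.
assert (0 <= (a1*b3-a3*b1)^2) by apply pow2_ge_0.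
assert (0 <= (a2*b3-a3*b2)^2) by apply pow2_ge_0.
lra.
Qed.

Lemma grad_norm ri k1 k2 k3 p1 p2 p3 Cmax : 0 < ri -> k1*k1+k2*k2+k3*k3 = 1 ->
  p1*p1+p2*p2+p3*p3 <= Cmax ->
  let s := p1*k1+p2*k2+p3*k3 in
  (k1 + (p1 - s*k1)/ri)*(k1 + (p1 - s*k1)/ri) + (k2 + (p2 - s*k2)/ri)*(k2 + (p2 - s*k2)/ri)
  + (k3 + (p3 - s*k3)/ri)*(k3 + (p3 - s*k3)/ri) <= 1 + Cmax / ri^2.
Proof.
intros Hr He Hp s.
set (e := k1*k1+k2*k2+k3*k3).
assert (E : (k1 + (p1 - s*k1)/ri)*(k1 + (p1 - s*k1)/ri) + (k2 + (p2 - s*k2)/ri)*(k2 + (p2 - s*k2)/ri)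
  + (k3 + (p3 - s*k3)/ri)*(k3 + (p3 - s*k3)/ri) - (1 + (p1*p1+p2*p2+p3*p3 - s*s)/ri^2)
  = (e - 1) * (1 - s/ri)^2) by (unfold e, s; field; lra).
assert (e = 1) by exact He.
rewrite H, Rminus_diag, Rmult_0_l in E.
assert ((p1*p1+p2*p2+p3*p3 - s*s)/ri^2 <= Cmax/ri^2).
{ unfold Rdiv. apply Rmult_le_compat_r.
  - apply Rlt_le, Rinv_0_lt_compat, pow_lt; lra.
  - nra. }
lra.
Qed.

Lemma core K c a b ri k1 k2 k3 x0 y0 z0 x1 y1 z1 Cmax :
  0 <= K -> 0 < c -> 0 < ri -> k1*k1+k2*k2+k3*k3 = 1 -> 0 <= Cmax ->
  (forall t, 0 <= t <= 1 ->
     (x0+t*(x1-x0))*(x0+t*(x1-x0)) + (y0+t*(y1-y0))*(y0+t*(y1-y0))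
     + (z0+t*(z1-z0))*(z0+t*(z1-z0)) <= Cmax) ->
  Rabs (K * cos (c*(r_il ri (k1,k2,k3) (x1,y1,z1) - a) + b)
        - K * cos (c*(r_il ri (k1,k2,k3) (x0,y0,z0) - a) + b)
        - ((- K * sin(c*(r_il ri (k1,k2,k3) (x0,y0,z0) - a)+b) * (c * (k1 + (x0 - (x0*k1+y0*k2+z0*k3)*k1)/ri))) * (x1-x0)
         + (- K * sin(c*(r_il ri (k1,k2,k3) (x0,y0,z0) - a)+b) * (c * (k2 + (y0 - (x0*k1+y0*k2+z0*k3)*k2)/ri))) * (y1-y0)
         + (- K * sin(c*(r_il ri (k1,k2,k3) (x0,y0,z0) - a)+b) * (c * (k3 + (z0 - (x0*k1+y0*k2+z0*k3)*k3)/ri))) * (z1-z0)))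
  <= K * sqrt (2 / ri ^ 2 + c ^ 2 * (1 + Cmax / ri ^ 2) ^ 2) * c / 2
     * ((x1-x0)*(x1-x0)+(y1-y0)*(y1-y0)+(z1-z0)*(z1-z0)).
Proof.
intros HK Hc Hr He HC Hp.
set (d1 := x1 - x0). set (d2 := y1 - y0). set (d3 := z1 - z0).
set (N := d1*d1+d2*d2+d3*d3).
set (dk := d1*k1+d2*k2+d3*k3).
set (s0 := x0*k1+y0*k2+z0*k3).
set (R0 := r_il ri (k1,k2,k3) (x0,y0,z0)).
set (R1 := dk + (x0*d1+y0*d2+z0*d3 - s0*dk)/ri).
set (Q := (N - dk*dk)/(2*ri)).
assert (E1 : r_il ri (k1,k2,k3) (x1,y1,z1) = R0 + R1*1 + Q*1*1).
{ unfold R0, R1, Q, N, dk, s0, d1, d2, d3, r_il, norm2, dot3, px, py, pz; simpl. field. lra. }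
rewrite E1.
replace (c * (R0 + R1 * 1 + Q * 1 * 1 - a) + b) with (th c a b R0 R1 Q 1) by (unfold th; ring).
replace (c * (R0 - a) + b) with (th c a b R0 R1 Q 0) by (unfold th; ring).
assert (EL : K * cos (th c a b R0 R1 Q 1) - K * cos (th c a b R0 R1 Q 0) -
  (- K * sin (th c a b R0 R1 Q 0) * (c * (k1 + (x0 - s0 * k1) / ri)) * d1 +
   - K * sin (th c a b R0 R1 Q 0) * (c * (k2 + (y0 - s0 * k2) / ri)) * d2 +
   - K * sin (th c a b R0 R1 Q 0) * (c * (k3 + (z0 - s0 * k3) / ri)) * d3)
  = phi K c a b R0 R1 Q 1 - phi K c a b R0 R1 Q 0 - phi1 K c a b R0 R1 Q 0).
{ unfold phi, phi1, R1, dk. field. lra. }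
rewrite EL.
set (A := 1 + Cmax / ri ^ 2).
replace (K * sqrt (2 / ri ^ 2 + c ^ 2 * A ^ 2) * c / 2 * N)
  with (K * sqrt (2 / ri ^ 2 + c ^ 2 * A ^ 2) * c * N / 2) by field.
apply phi_taylor.
intros t Ht. unfold phi2.
assert (Hdk : dk * dk <= N).
{ assert (H := cs3 d1 d2 d3 k1 k2 k3). unfold dk, N. rewrite He in H. lra. }
assert (HN : 0 <= N) by (unfold N; nra).
apply hess_bound.
- exact HK.
- exact Hc.
- exact Hr.
- unfold A. assert (0 <= Cmax / ri^2).
  { unfold Rdiv. apply Rmult_le_pos; [lra| apply Rlt_le, Rinv_0_lt_compat, pow_lt; lra]. }
  lra.
- exact HN.
- split.
  + unfold Q. replace (2 * ((N - dk * dk) / (2 * ri))) with ((N - dk*dk) / ri) by (field; lra).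
    unfold Rdiv. apply Rmult_le_pos; [lra| apply Rlt_le, Rinv_0_lt_compat; lra].
  + unfold Q. replace (2 * ((N - dk * dk) / (2 * ri))) with ((N - dk*dk) / ri) by (field; lra).
    unfold Rdiv. apply Rmult_le_compat_r; [apply Rlt_le, Rinv_0_lt_compat; lra|].
    assert (0 <= dk*dk) by nra. lra.
- set (p1 := x0 + t*d1). set (p2 := y0 + t*d2). set (p3 := z0 + t*d3).
  set (s := p1*k1+p2*k2+p3*k3).
  assert (Ew : R1 + 2 * Q * t =
     (k1 + (p1 - s*k1)/ri) * d1 + (k2 + (p2 - s*k2)/ri) * d2 + (k3 + (p3 - s*k3)/ri) * d3).
  { unfold R1, Q, s, p1, p2, p3, dk, s0, N. field. lra. }
  rewrite Ew.
  eapply Rle_trans; [apply cs3|].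
  rewrite Rmult_comm. apply Rmult_le_compat_l; [exact HN|].
  apply grad_norm; [exact Hr|exact He|].
  apply Hp; exact Ht.
- assert (H := sin2_cos2 (th c a b R0 R1 Q t)). unfold Rsqr in H. lra.
Qed.

Lemma sum_derive (F : nat -> R -> R) (dF : nat -> R) x n :
  (forall j, is_derive (F j) x (dF j)) ->
  is_derive (fun t => sum_f_R0 (fun j => F j t) n) x (sum_f_R0 dF n).
Proof.
intro H. induction n as [|n IH].
- simpl. apply H.
- simpl. apply (is_derive_plus (fun t => sum_f_R0 (fun j => F j t) n) (F (S n))); auto.
Qed.

Lemma sum_ineq (a b dx dy dz D : nat -> R) d1 d2 d3 N n :
  (forall j, Rabs (a j - b j - (dx j * d1 + dy j * d2 + dz j * d3)) <= D j / 2 * N) ->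
  Rabs (sum_f_R0 a n - sum_f_R0 b n - (sum_f_R0 dx n * d1 + sum_f_R0 dy n * d2 + sum_f_R0 dz n * d3))
   <= sum_f_R0 D n / 2 * N.
Proof.
intro H. induction n as [|n IH].
- simpl. apply H.
- simpl.
  replace (sum_f_R0 a n + a (S n) - (sum_f_R0 b n + b (S n)) -
    ((sum_f_R0 dx n + dx (S n)) * d1 + (sum_f_R0 dy n + dy (S n)) * d2 + (sum_f_R0 dz n + dz (S n)) * d3))
  with ((sum_f_R0 a n - sum_f_R0 b n - (sum_f_R0 dx n * d1 + sum_f_R0 dy n * d2 + sum_f_R0 dz n * d3))
       + (a (S n) - b (S n) - (dx (S n) * d1 + dy (S n) * d2 + dz (S n) * d3))) by ring.
  eapply Rle_trans; [apply Rabs_triang|].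
  specialize (H (S n)).
  replace ((sum_f_R0 D n + D (S n)) / 2 * N) with (sum_f_R0 D n / 2 * N + D (S n) / 2 * N) by field.
  lra.
Qed.

Theorem lemma1 (lam : R) (L l : nat) (alpha : C) (ri : R) (kap : R3)
    (V : nat -> C) (rl' : nat -> R) (S : R3 -> Prop) (Cmax : R) :
  0 < lam -> (2 <= L)%nat -> (l < L)%nat -> 0 < ri -> norm2 kap = 1 ->
  convex3 S ->
  is_lub (fun c => exists q, S q /\ c = norm2 q) Cmax ->
  forall q qj : R3, S q -> S qj ->
    g_kil lam L l alpha ri kap V rl' q >=
      g_kil lam L l alpha ri kap V rl' qj
      + dot3 (grad3 (g_kil lam L l alpha ri kap V rl') qj) (sub3 q qj)
      - delta_kil lam L l alpha ri V Cmax / 2 * norm2 (sub3 q qj)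
    /\
    g_kil lam L l alpha ri kap V rl' q <=
      g_kil lam L l alpha ri kap V rl' qj
      + dot3 (grad3 (g_kil lam L l alpha ri kap V rl') qj) (sub3 q qj)
      + delta_kil lam L l alpha ri V Cmax / 2 * norm2 (sub3 q qj).
Proof.
intros Hlam HL Hl Hr Hk Hconv Hlub q qj Hq Hqj.
assert (HC : 0 <= Cmax).
{ destruct Hlub as [Hub _]. assert (norm2 q <= Cmax) by (apply Hub; exists q; auto).
  destruct q as [[a1 a2] a3]. unfold norm2, dot3, px, py, pz in *; simpl in *. nra. }
assert (Hseg : forall t, 0 <= t <= 1 ->
  (px qj + t*(px q - px qj))*(px qj + t*(px q - px qj)) + (py qj + t*(py q - py qj))*(py qj + t*(py q - py qj))
  + (pz qj + t*(pz q - pz qj))*(pz qj + t*(pz q - pz qj)) <= Cmax).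
{ intros t Ht. destruct Hlub as [Hub _].
  assert (H := Hconv q qj t Hq Hqj Ht).
  assert (H2 := Hub _ (ex_intro _ _ (conj H eq_refl))).
  unfold norm2, dot3 in H2. cbn [px py pz fst snd] in H2.
  replace (px qj + t * (px q - px qj)) with (t * px q + (1 - t) * px qj) by ring.
  replace (py qj + t * (py q - py qj)) with (t * py q + (1 - t) * py qj) by ring.
  replace (pz qj + t * (pz q - pz qj)) with (t * pz q + (1 - t) * pz qj) by ring.
  exact H2. }
destruct q as [[x1 y1] z1], qj as [[x0 y0] z0], kap as [[k1 k2] k3].
cbn [px py pz fst snd] in Hseg.
assert (He : k1*k1+k2*k2+k3*k3 = 1) by exact Hk.
set (c := 2 * PI / lam).
assert (Hc : 0 < c) by (unfold c; apply Rdiv_lt_0_compat; [assert (H:=PI_RGT_0); lra | exact Hlam]).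
set (K := fun j => 2 * Cmod alpha ^ 2 * Cmod (V j)).
assert (HK : forall j, 0 <= K j).
{ intro j. unfold K. assert (H1 := Cmod_ge_0 alpha). assert (H2 := Cmod_ge_0 (V j)).
  apply Rmult_le_pos; [|exact H2]. apply Rmult_le_pos; [lra| apply pow2_ge_0]. }
set (Mq := sqrt (2 / ri ^ 2 + c ^ 2 * (1 + Cmax / ri ^ 2) ^ 2)).
set (s0 := x0*k1+y0*k2+z0*k3).
set (sn := fun j => sin(c*(r_il ri (k1,k2,k3) (x0,y0,z0) - rl' j) + Carg (V j))).
set (dx := fun j => if Nat.eqb j l then 0 else - K j * sn j * (c * (k1 + (x0 - s0*k1)/ri))).
set (dy := fun j => if Nat.eqb j l then 0 else - K j * sn j * (c * (k2 + (y0 - s0*k2)/ri))).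
set (dz := fun j => if Nat.eqb j l then 0 else - K j * sn j * (c * (k3 + (z0 - s0*k3)/ri))).
set (D := fun j => if Nat.eqb j l then 0 else K j * Mq * c).
set (T := fun j q => if Nat.eqb j l then 0 else K j * cos (c * (r_il ri (k1,k2,k3) q - rl' j) + Carg (V j))).
assert (Eg : forall q, g_kil lam L l alpha ri (k1,k2,k3) V rl' q = sum_f_R0 (fun j => T j q) (L - 1))
  by reflexivity.
assert (Egr : grad3 (g_kil lam L l alpha ri (k1,k2,k3) V rl') (x0,y0,z0)
   = (sum_f_R0 dx (L-1), sum_f_R0 dy (L-1), sum_f_R0 dz (L-1))).
{ unfold grad3. cbn [px py pz fst snd]. f_equal; [f_equal|].
  - apply is_derive_unique.
    apply (sum_derive (fun j t => T j (t, y0, z0))). intro j. unfold T, dx.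
    destruct (Nat.eqb j l). + apply (is_derive_const 0). + apply dX_lem; exact Hr.
  - apply is_derive_unique.
    apply (sum_derive (fun j t => T j (x0, t, z0))). intro j. unfold T, dy.
    destruct (Nat.eqb j l). + apply (is_derive_const 0). + apply dY_lem; exact Hr.
  - apply is_derive_unique.
    apply (sum_derive (fun j t => T j (x0, y0, t))). intro j. unfold T, dz.
    destruct (Nat.eqb j l). + apply (is_derive_const 0). + apply dZ_lem; exact Hr. }
assert (Ed : delta_kil lam L l alpha ri V Cmax = sum_f_R0 D (L - 1)).
{ unfold delta_kil. fold c. rewrite scal_sum. apply sum_eq. intros i _.
  unfold D. destruct (Nat.eqb i l); [ring|]. unfold Mq, K. ring. }
assert (Main : Rabs (sum_f_R0 (fun j => T j (x1,y1,z1)) (L-1) - sum_f_R0 (fun j => T j (x0,y0,z0)) (L-1)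
   - (sum_f_R0 dx (L-1) * (x1-x0) + sum_f_R0 dy (L-1) * (y1-y0) + sum_f_R0 dz (L-1) * (z1-z0)))
   <= sum_f_R0 D (L-1) / 2 * ((x1-x0)*(x1-x0)+(y1-y0)*(y1-y0)+(z1-z0)*(z1-z0))).
{ apply sum_ineq. intro j. unfold T, dx, dy, dz, D.
  destruct (Nat.eqb j l).
  - replace (0 - 0 - (0 * (x1 - x0) + 0 * (y1 - y0) + 0 * (z1 - z0))) with 0 by ring.
    rewrite Rabs_R0. lra.
  - unfold sn, s0, Mq. apply core; auto. }
rewrite Eg, Eg, Egr, Ed.
unfold dot3, sub3, norm2, dot3. cbn [px py pz fst snd].
apply abs_inv in Main. lra.
Qed.
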